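(* Let $n\geq 2$, $\alpha>0$, and $k\in\mathbb{N}\setminus\{0\}$. Let $\mathbb{D}_k:=\{2^{-j}:0\leq j\leq k\}$ and $$\mathscr{R}_k:=\Big\{[0,s_1]\times\cdots\times[0,s_{n-1}]\times\Big[0,\frac{\alpha}{s_1\cdots s_{n-1}}\Big] : s_1,\dots,s_{n-1}\in\mathbb{D}_k\Big\}.$$ Then $\big|\bigcup_{R\in\mathscr{R}_k}R\big|\geq\frac{1}{3\cdot 2^{n-2}}\,k^{n-1}\alpha$.
   Context: $|\cdot|$ denotes Lebesgue measure on $\mathbb{R}^n$. *)

(* Defs.v *)
From Stdlib Require Import Reals.
Open Scope R_scope.

(* Points of R^n are represented as functions nat -> R; only the
   coordinates 0..n-1 are relevant. *)

Fixpoint prodR (n : nat) (f : nat -> R) : R :=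
  match n with
  | O => 1
  | S m => prodR m f * f m
  end.

Fixpoint sumR (N : nat) (g : nat -> R) : R :=
  match N with
  | O => 0
  | S m => sumR m g + g m
  end.

Definition box_vol (n : nat) (a b : nat -> R) : R :=
  prodR n (fun i => Rmax 0 (b i - a i)).

Definition box_cover (n : nat) (E : (nat -> R) -> Prop)
  (a b : nat -> nat -> R) : Prop :=
  forall x, E x -> exists k : nat,
    forall i, (i < n)%nat -> a k i <= x i <= b k i.

(* Lebesgue (outer) measure of E ⊆ R^n is at least c:
   |E| = inf over countable box covers of sum of volumes (in [0, +oo]),
   so |E| >= c iff for every cover, c <= sup of the partial sums
   of the volumes, i.e. c is below every upper bound of the partial sums. *)
Definition lebesgue_measure_ge (n : nat) (E : (nat -> R) -> Prop) (c : R) : Prop :=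
  forall a b : nat -> nat -> R, box_cover n E a b ->
    forall M : R, (forall N : nat, sumR N (fun k => box_vol n (a k) (b k)) <= M) ->
    c <= M.

Definition in_Dk (k : nat) (s : R) : Prop :=
  exists j : nat, (j <= k)%nat /\ s = / 2 ^ j.

(* Union of the boxes in R_k:
   [0,s_1] x ... x [0,s_{n-1}] x [0, alpha/(s_1...s_{n-1})], s_i in D_k.
   Coordinates are indexed 0..n-1; s is indexed 0..n-2. *)
Definition union_Rk (n k : nat) (alpha : R) (x : nat -> R) : Prop :=
  exists s : nat -> R,
    (forall i, (i < n - 1)%nat -> in_Dk k (s i)) /\
    (forall i, (i < n - 1)%nat -> 0 <= x i <= s i) /\
    0 <= x (n - 1)%nat <= alpha / prodR (n - 1) s.

(* Main.v *)
Require Import Defs.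
From Stdlib Require Import Reals Lra Lia List ClassicalDescription Classical.
Import ListNotations.
Open Scope R_scope.

Definition ind (P : Prop) : R := if excluded_middle_informative P then 1 else 0.

Lemma ind_T (P : Prop) : P -> ind P = 1.
Proof. intro H. unfold ind. destruct (excluded_middle_informative P); tauto. Qed.
Lemma ind_F (P : Prop) : ~ P -> ind P = 0.
Proof. intro H. unfold ind. destruct (excluded_middle_informative P); tauto. Qed.
Lemma ind_01 P : 0 <= ind P <= 1.
Proof. unfold ind. destruct (excluded_middle_informative P); lra. Qed.
Lemma ind_iff P Q : (P <-> Q) -> ind P = ind Q.
Proof.
  intro H. destruct (classic P) as [HP|HP].
  - rewrite (ind_T P HP), (ind_T Q (proj1 H HP)); reflexivity.
  - rewrite (ind_F P HP), (ind_F Q (fun q => HP (proj2 H q))); reflexivity.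
Qed.
Lemma ind_and P Q : ind (P /\ Q) = ind P * ind Q.
Proof.
  destruct (classic P) as [HP|HP]; destruct (classic Q) as [HQ|HQ].
  - rewrite ind_T, ind_T, ind_T; auto; ring.
  - rewrite (ind_F (P /\ Q)), (ind_F Q); [ring|tauto|tauto].
  - rewrite (ind_F (P /\ Q)), (ind_F P); [ring|tauto|tauto].
  - rewrite (ind_F (P /\ Q)), (ind_F P); [ring|tauto|tauto].
Qed.
Lemma ind_mono P Q : (P -> Q) -> ind P <= ind Q.
Proof.
  intro H. destruct (classic P) as [HP|HP].
  - rewrite (ind_T P HP), (ind_T Q (H HP)); lra.
  - rewrite (ind_F P HP). apply ind_01.
Qed.

Definition lsum {A : Type} (L : list A) (f : A -> R) : R :=
  fold_right (fun q acc => f q + acc) 0 L.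

Lemma lsum_ext {A} (L : list A) f g : (forall q, In q L -> f q = g q) -> lsum L f = lsum L g.
Proof.
  induction L as [|q L IH]; intro H; simpl; [reflexivity|].
  rewrite H by (left; reflexivity). rewrite IH; [reflexivity|].
  intros q' Hq'; apply H; right; exact Hq'.
Qed.
Lemma lsum_map {A B} (h : A -> B) (L : list A) f : lsum (map h L) f = lsum L (fun q => f (h q)).
Proof. induction L as [|q L IH]; simpl; [reflexivity|]. rewrite IH; reflexivity. Qed.
Lemma lsum_app {A} (L1 L2 : list A) f : lsum (L1 ++ L2) f = lsum L1 f + lsum L2 f.
Proof. induction L1 as [|q L IH]; simpl; [ring|]. rewrite IH; ring. Qed.
Lemma lsum_scal {A} (L : list A) f al : lsum L (fun q => al * f q) = al * lsum L f.
Proof. induction L as [|q L IH]; simpl; [ring|]. rewrite IH; ring. Qed.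
Lemma lsum_ge0 {A} (L : list A) f : (forall q, In q L -> 0 <= f q) -> 0 <= lsum L f.
Proof.
  induction L as [|q L IH]; intro H; simpl; [lra|].
  assert (0 <= f q) by (apply H; left; reflexivity).
  assert (0 <= lsum L f) by (apply IH; intros; apply H; right; assumption). lra.
Qed.
Lemma lsum_flat_seq {A} (F : nat -> list A) (f : A -> R) k :
  lsum (flat_map F (seq 0 k)) f = sumR k (fun j => lsum (F j) f).
Proof.
  induction k as [|k IH]; [reflexivity|].
  rewrite seq_S, flat_map_app, lsum_app, IH. simpl. rewrite app_nil_r. ring.
Qed.

Lemma sumR_ext N u v : (forall k, (k < N)%nat -> u k = v k) -> sumR N u = sumR N v.
Proof.
  induction N as [|N IH]; intro H; simpl; [reflexivity|].
  rewrite IH, H; [reflexivity|lia|]. intros; apply H; lia.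
Qed.
Lemma sumR_ge0 N u : (forall k, 0 <= u k) -> 0 <= sumR N u.
Proof. induction N as [|N IH]; intro H; simpl; [lra|]. specialize (IH H). specialize (H N). lra. Qed.
Lemma sumR_const N c : sumR N (fun _ => c) = INR N * c.
Proof. induction N as [|N IH]; simpl sumR; [simpl; ring|]. rewrite IH, S_INR; ring. Qed.
Lemma sumR_zero N u : (forall k, (k < N)%nat -> u k = 0) -> sumR N u = 0.
Proof.
  intro H. rewrite (sumR_ext N u (fun _ => 0)) by exact H. rewrite sumR_const; ring.
Qed.

Definition ss (u : nat -> R) (c : R) := forall M, (forall N, sumR N u <= M) -> c <= M.
Lemma ss_ext u v c d : (forall k, u k = v k) -> c = d -> ss u c -> ss v d.
Proof.
  intros Huv Hcd H M HM. rewrite <- Hcd. apply H. intro N.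
  rewrite (sumR_ext N u v) by (intros; apply Huv). apply HM.
Qed.

Definition shift (f : nat -> R) : nat -> R := fun i => f (S i).
Definition consf (v : R) (f : nat -> R) : nat -> R :=
  fun i => match i with O => v | S j => f j end.

Lemma prodR_S m f : prodR (S m) f = f O * prodR m (shift f).
Proof.
  induction m as [|m IH]; [simpl; ring|].
  change (prodR (S (S m)) f) with (prodR (S m) f * f (S m)).
  rewrite IH. change (prodR (S m) (shift f)) with (prodR m (shift f) * shift f m).
  unfold shift; ring.
Qed.
Lemma prodR_ge0 m f : (forall i, (i < m)%nat -> 0 <= f i) -> 0 <= prodR m f.
Proof.
  induction m as [|m IH]; intro H; simpl; [lra|].
  apply Rmult_le_pos; [apply IH; intros; apply H; lia| apply H; lia].
Qed.
Lemma prodR_pos m f : (forall i, (i < m)%nat -> 0 < f i) -> 0 < prodR m f.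
Proof.
  induction m as [|m IH]; intro H; simpl; [lra|].
  apply Rmult_lt_0_compat; [apply IH; intros; apply H; lia| apply H; lia].
Qed.
Lemma box_vol_ge0 m a b : 0 <= box_vol m a b.
Proof. unfold box_vol. apply prodR_ge0. intros. apply Rmax_l. Qed.

Definition inbox m (a b x : nat -> R) : Prop := forall i, (i < m)%nat -> a i <= x i <= b i.
Definition inhbox m (l r x : nat -> R) : Prop := forall i, (i < m)%nat -> l i < x i <= r i.
Definition trip := (R * (nat -> R) * (nat -> R))%type.
Definition Fval m (T : list trip) x :=
  lsum T (fun p => fst (fst p) * ind (inhbox m (snd (fst p)) (snd p) x)).
Definition Tval m (T : list trip) :=
  lsum T (fun p => fst (fst p) * prodR m (fun i => Rmax 0 (snd p i - snd (fst p) i))).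

Lemma inbox_S m a b x :
  inbox (S m) a b x <-> (a O <= x O <= b O) /\ inbox m (shift a) (shift b) (shift x).
Proof.
  split.
  - intro H. split; [apply H; lia|]. intros i Hi. apply (H (S i)); lia.
  - intros [H0 H1] i Hi. destruct i as [|i]; [exact H0|]. apply (H1 i); lia.
Qed.
Lemma inhbox_S m a b x :
  inhbox (S m) a b x <-> (a O < x O <= b O) /\ inhbox m (shift a) (shift b) (shift x).
Proof.
  split.
  - intro H. split; [apply H; lia|]. intros i Hi. apply (H (S i)); lia.
  - intros [H0 H1] i Hi. destruct i as [|i]; [exact H0|]. apply (H1 i); lia.
Qed.


From HB Require Import structures.
From mathcomp Require all_boot all_order all_algebra all_classical all_reals all_analysis.
From mathcomp Require measurable_realfun measurable_fun_approximation lebesgue_integral_definition lebesgue_integral_monotone_convergence lebesgue_integral_nonneg sequences lebesgue_measure Rstruct.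

Module MC.
Import all_boot all_order all_algebra all_classical all_reals all_analysis.
Import measurable_realfun measurable_fun_approximation lebesgue_integral_definition lebesgue_integral_monotone_convergence lebesgue_integral_nonneg sequences lebesgue_measure Rstruct.
Import Order.TTheory GRing.Theory Num.Theory.
Local Open Scope ring_scope.
Local Open Scope classical_set_scope.

Section S.
Variable R : realType.
Local Open Scope ring_scope.
Definition supsense (u : nat -> R) (c : R) :=
  forall M : R, (forall N, \sum_(k < N) u k <= M) -> c <= M.

Local Open Scope ereal_scope.
Lemma supsense_E (u : nat -> R) c : (forall k, 0 <= u k)%R ->
  supsense u c <-> (c%:E <= \sum_(k <oo) (u k)%:E).
Proof.
move=> u0; have u0' : forall n, (0 <= n)%N -> xpredT n -> (0 <= (u n)%:E).
  by move=> n _ _; rewrite lee_fin.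
split.
- move=> H.
  have : (0 <= \sum_(k <oo) (u k)%:E) by apply: nneseries_ge0.
  move Es: (\sum_(k <oo) (u k)%:E) => S.
  case: S Es => [r||] Es //; rewrite ?leey //.
  move=> _; rewrite lee_fin; apply: H => N.
  have := @nneseries_lim_ge R (fun k => (u k)%:E) xpredT 0 N u0'.
  by rewrite Es big_mkord sumEFin lee_fin.
- move=> H M HM; have : (\sum_(k <oo) (u k)%:E <= M%:E).
    move: (ereal_nondecreasing_series u0') => /ereal_nondecreasing_cvgn/cvg_lim ->//.
    apply: ub_ereal_sup => _ [N _ <-] /=.
    by rewrite big_mkord sumEFin lee_fin.
  by move=> /(le_trans H); rewrite lee_fin.
Qed.

Local Open Scope ereal_scope.
Notation mu := (@lebesgue_measure R).

Lemma mf_ci (c : R) (i : interval R) :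
  measurable_fun setT (fun t : R => (c * (t \in i)%:R)%:E).
Proof.
apply/measurable_EFinP.
have -> : (fun t : R => c * (t \in i)%:R)%R = (fun t => c * \1_[set` i] t)%R.
  by apply: funext => t; rewrite indicE mem_setE.
by apply: measurable_funM => //; apply: measurable_indic; exact: measurable_itv.
Qed.

Lemma int_ci (c : R) (x y : R) (bx by' : bool) : (0 <= c)%R ->
  \int[mu]_(t in setT) ((c * (t \in Interval (BSide bx x) (BSide by' y))%:R)%:E)
  = (c * Num.max 0 (y - x))%:E.
Proof.
move=> c0.
have -> : (fun t : R => (c * (t \in Interval (BSide bx x) (BSide by' y))%:R)%:E)
   = (fun t => c%:E * (\1_[set` Interval (BSide bx x) (BSide by' y)] t)%:E).
  by apply: funext => t; rewrite indicE mem_setE.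
rewrite ge0_integralZl_EFin //.
rewrite (@integral_indic _ _ R mu setT measurableT _ (measurable_itv _)).
rewrite setIT.
have := @lebesgue_measure_itv R (Interval (BSide bx x) (BSide by' y)).
move=> H.
apply: (@eq_trans _ _ (c%:E * (@lebesgue_measure R [set` Interval (BSide bx x) (BSide by' y)]))).
  by [].
rewrite H /= lte_fin; case: ltP => h.
    rewrite -EFinD -EFinM max_r //; by rewrite subr_ge0 ltW.
  rewrite mule0 max_l //; last by rewrite subr_le0.
  by rewrite mulr0.
apply: measurableT_comp => //; apply: measurable_indic; exact: measurable_itv.
Qed.

Lemma mf_ci' (c : R) (i : interval R) :
  measurable_fun setT (fun t : R => (c * (t \in i)%:R)%R).
Proof.
have -> : (fun t : R => c * (t \in i)%:R)%R = (fun t => c * \1_[set` i] t)%R.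
  by apply: funext => t; rewrite indicE mem_setE.
by apply: measurable_funM => //; apply: measurable_indic; exact: measurable_itv.
Qed.

Lemma int_sumL (L : seq (R * R * R)) : (forall q, q \in L -> 0 <= q.1.1)%R ->
  \int[mu]_x ((\sum_(q <- L) q.1.1 * (x \in `]q.1.2, q.2])%:R)%:E)
  = (\sum_(q <- L) q.1.1 * Num.max 0 (q.2 - q.1.2))%:E.
Proof.
elim: L => [|q L IH] H.
  rewrite big_nil; apply: integral0_eq => x _; by rewrite big_nil.
under eq_integral do rewrite big_cons EFinD.
rewrite ge0_integralD //.
- rewrite int_ci; last by apply: H; rewrite mem_head.
  rewrite IH; last by move=> q' Hq'; apply: H; rewrite in_cons Hq' orbT.
  by rewrite big_cons EFinD.
- move=> x _; rewrite lee_fin; apply: mulr_ge0; last by [].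
  by apply: H; rewrite mem_head.
- exact: mf_ci.
- move=> x _; rewrite lee_fin; rewrite big_seq; apply: sumr_ge0 => q' Hq'.
  by apply: mulr_ge0 => //; apply: H; rewrite in_cons Hq' orbT.
- apply: measurableT_comp => //; apply: measurable_sum => q'; exact: mf_ci'.
Qed.

Lemma key1D (w a b : nat -> R) (L : seq (R * R * R)) :
  (forall k, 0 <= w k)%R -> (forall q, q \in L -> 0 <= q.1.1)%R ->
  (forall t, supsense (fun k => w k * (t \in `[a k, b k])%:R)%R
                     (\sum_(q <- L) q.1.1 * (t \in `]q.1.2, q.2])%:R)%R) ->
  supsense (fun k => w k * Num.max 0 (b k - a k))%R
    (\sum_(q <- L) q.1.1 * Num.max 0 (q.2 - q.1.2))%R.
Proof.
move=> w0 d0 H.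
have f0 : forall k t, (0 <= w k * (t \in `[a k, b k])%:R)%R.
  by move=> k t; apply: mulr_ge0.
apply/supsense_E.
  by move=> k; apply: mulr_ge0 => //; rewrite le_max lexx.
rewrite -int_sumL //.
have -> : \sum_(k <oo) ((w k * Num.max 0 (b k - a k))%:E) =
    \sum_(k <oo) \int[mu]_x ((w k * (x \in `[a k, b k])%:R)%:E).
  by apply: eq_eseriesr => k _; rewrite int_ci.
rewrite -integral_nneseries //; last first.
  by move=> k x _; rewrite lee_fin.
  by move=> k; exact: mf_ci.
apply: ge0_le_integral => //.
- move=> x _; rewrite lee_fin big_seq; apply: sumr_ge0 => q' Hq'.
  by apply: mulr_ge0 => //; apply: d0.
- apply: measurableT_comp => //; apply: measurable_sum => q'; exact: mf_ci'.
- exact: (@ge0_emeasurable_sum _ _ R setT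
      (fun k x => (w k * (x \in `[a k, b k])%:R)%:E) xpredT
      (fun k x _ _ => f0 k x) (fun k _ => mf_ci (w k) `[a k, b k])).
- move=> x _; apply/supsense_E => //; exact: H.
Qed.
End S.


Section Bridge.
Local Open Scope ring_scope.

Lemma sumR_big (N : nat) (u : nat -> R) : sumR N u = \sum_(k < N) u k.
Proof.
elim: N => [|N IH]; first by rewrite big_ord0.
by rewrite big_ord_recr /= IH.
Qed.

Lemma lsum_big (L : list (R * R * R)) (f : R * R * R -> R) :
  lsum L f = \sum_(q <- L) f q.
Proof.
elim: L => [|q L IH]; first by rewrite big_nil.
by rewrite big_cons /= IH.
Qed.

Lemma ind_cc (x t y : R) : ind (Rle x t /\ Rle t y) = (t \in `[x, y])%:R.
Proof.
rewrite in_itv /=.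
case E: ((x <= t) && (t <= y)).
  move/andP: E => [/RleP h1 /RleP h2]; rewrite ind_T //.
rewrite ind_F //; move=> [/RleP h1 /RleP h2].
by rewrite h1 h2 in E.
Qed.

Lemma ind_oc (x t y : R) : ind (Rlt x t /\ Rle t y) = (t \in `]x, y])%:R.
Proof.
rewrite in_itv /=.
case E: ((x < t) && (t <= y)).
  move/andP: E => [/RltP h1 /RleP h2]; rewrite ind_T //.
rewrite ind_F //; move=> [/RltP h1 /RleP h2].
by rewrite h1 h2 in E.
Qed.

Lemma in_In (L : list (R * R * R)) q : q \in L -> List.In q L.
Proof.
elim: L => [|q' L IH] //=; rewrite in_cons => /orP [/eqP ->|h]; [by left|right; exact: IH].
Qed.

Lemma key1D_R (w a b : nat -> R) (L : list (R * R * R)) :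
  (forall k, Rle 0 (w k)) -> (forall q, List.In q L -> Rle 0 (fst (fst q))) ->
  (forall t, ss (fun k => Rmult (w k) (ind (Rle (a k) t /\ Rle t (b k))))
      (lsum L (fun q => Rmult (fst (fst q)) (ind (Rlt (snd (fst q)) t /\ Rle t (snd q)))))) ->
  ss (fun k => Rmult (w k) (Rmax 0 (Rminus (b k) (a k))))
     (lsum L (fun q => Rmult (fst (fst q)) (Rmax 0 (Rminus (snd q) (snd (fst q)))))).
Proof.
move=> Hw HL H M HM.
have K := @key1D R w a b L.
apply/RleP; rewrite lsum_big.
under eq_bigr do rewrite RmaxE.
apply: K.
- by move=> k; apply/RleP.
- by move=> q /in_In /HL /RleP.
- move=> t M' HM'.
  under eq_bigr do rewrite -ind_oc.
  rewrite -lsum_big.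
  apply/RleP; apply: H => N; apply/RleP; rewrite sumR_big.
  by under eq_bigr do rewrite ind_cc.
- move=> N; apply/RleP; move: (HM N); rewrite sumR_big.
  by under eq_bigr do rewrite RmaxE.
Qed.

End Bridge.
End MC.

Set Bullet Behavior "Strict Subproofs".
Open Scope R_scope.
Definition key1D_R := MC.key1D_R.

Lemma claim m : forall (T : list trip) (w : nat -> R) (a b : nat -> nat -> R),
  (forall k, 0 <= w k) -> (forall p, In p T -> 0 <= fst (fst p)) ->
  (forall x, ss (fun k => w k * ind (inbox m (a k) (b k) x)) (Fval m T x)) ->
  ss (fun k => w k * box_vol m (a k) (b k)) (Tval m T).
Proof.
  induction m as [|m IH]; intros T w a b Hw HT H.
  - specialize (H (fun _ => 0)). revert H. apply ss_ext.
    + intro k. unfold box_vol. simpl. rewrite ind_T; [ring| intros i Hi; lia].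
    + unfold Fval, Tval. apply lsum_ext. intros p _. simpl. rewrite ind_T; [ring | intros i Hi; lia].
  - set (w1 := fun k => w k * box_vol m (shift (a k)) (shift (b k))).
    set (L := map (fun p : trip => (fst (fst p) * prodR m (fun i => Rmax 0 (snd p (S i) - snd (fst p) (S i))), snd (fst p) O, snd p O)) T).
    assert (K := key1D_R w1 (fun k => a k O) (fun k => b k O) L).
    revert K. intro K. refine (ss_ext _ _ _ _ _ _ (K _ _ _)).
    + intro k. unfold w1, box_vol. rewrite (prodR_S m (fun i => Rmax 0 (b k i - a k i))).
      unfold shift. ring.
    + unfold L, Tval. rewrite lsum_map. apply lsum_ext. intros p _. cbn [fst snd].
      rewrite (prodR_S m (fun i => Rmax 0 (snd p i - snd (fst p) i))). unfold shift. ring.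
    + intro k. unfold w1. apply Rmult_le_pos; [apply Hw | apply box_vol_ge0].
    + intros q Hq. unfold L in Hq. apply in_map_iff in Hq. destruct Hq as [p [Hp1 Hp2]].
      subst q. simpl. apply Rmult_le_pos; [apply HT; exact Hp2|].
      apply prodR_ge0. intros; apply Rmax_l.
    + intro t.
      set (Tt := map (fun p : trip => (fst (fst p) * ind (snd (fst p) O < t <= snd p O),
                                      shift (snd (fst p)), shift (snd p))) T).
      assert (IHt := IH Tt (fun k => w k * ind (a k O <= t <= b k O))
                        (fun k => shift (a k)) (fun k => shift (b k))).
      refine (ss_ext _ _ _ _ _ _ (IHt _ _ _)).
      * intro k. unfold w1. ring.
      * unfold Tt, Tval, L. rewrite !lsum_map. apply lsum_ext. intros p _. simpl.
        unfold shift. ring.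
      * intro k. apply Rmult_le_pos; [apply Hw | apply ind_01].
      * intros q Hq. unfold Tt in Hq. apply in_map_iff in Hq. destruct Hq as [p [Hp1 Hp2]].
        subst q. simpl. apply Rmult_le_pos; [apply HT; exact Hp2| apply ind_01].
      * intro x'. specialize (H (consf t x')). revert H. apply ss_ext.
        -- intro k. rewrite (ind_iff _ _ (inbox_S m (a k) (b k) (consf t x'))), ind_and.
           change (shift (consf t x')) with x'. change (consf t x' O) with t. ring.
        -- unfold Fval, Tt. rewrite lsum_map. apply lsum_ext. intros p _. simpl.
           rewrite (ind_iff _ _ (inhbox_S m (snd (fst p)) (snd p) (consf t x'))), ind_and.
           change (shift (consf t x')) with x'. change (consf t x' O) with t. ring.
Qed.

Definition cells_step (k : nat) (F : nat -> list trip) : list trip :=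
  flat_map (fun j => map (fun p : trip =>
     (fst (fst p), consf (/ 2 ^ (S j)) (snd (fst p)), consf (/ 2 ^ j) (snd p))) (F j))
   (seq 0 k).
Fixpoint cells (k m : nat) (h : R) : list trip :=
  match m with
  | O => [(1, (fun _ => 0), (fun _ => h))]
  | S m' => cells_step k (fun j => cells k m' (h * 2 ^ j))
  end.

Definition Eset (k m : nat) (h : R) (x : nat -> R) : Prop :=
  exists s : nat -> R,
    (forall i, (i < m)%nat -> in_Dk k (s i)) /\
    (forall i, (i < m)%nat -> 0 <= x i <= s i) /\
    0 <= x m <= h / prodR m s.

Lemma cells_c k m : forall h p, In p (cells k m h) -> fst (fst p) = 1.
Proof.
  induction m as [|m IH]; intros h p Hp.
  - simpl in Hp. destruct Hp as [Hp|[]]. subst p. reflexivity.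
  - simpl in Hp. unfold cells_step in Hp. apply in_flat_map in Hp.
    destruct Hp as [j [_ Hj]]. apply in_map_iff in Hj. destruct Hj as [q [Hq1 Hq2]].
    subst p. simpl. exact (IH _ _ Hq2).
Qed.

Lemma inv_pow_le (a b : nat) : (a <= b)%nat -> / 2 ^ b <= / 2 ^ a.
Proof.
  intro H. apply Rinv_le_contravar; [apply pow_lt; lra|]. apply Rle_pow; [lra|exact H].
Qed.

Lemma cells_T k m : forall h, 0 <= h -> Tval (S m) (cells k m h) = h * (INR k / 2) ^ m.
Proof.
  induction m as [|m IH]; intros h Hh.
  - unfold Tval. simpl. rewrite Rmax_right; lra.
  - change (cells k (S m) h) with (cells_step k (fun j => cells k m (h * 2 ^ j))).
    unfold cells_step, Tval. rewrite lsum_flat_seq.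
    rewrite (sumR_ext k _ (fun _ => h / 2 * (INR k / 2) ^ m)).
    + rewrite sumR_const. simpl. field.
    + intros j Hj. rewrite lsum_map.
      assert (Hp : 0 < 2 ^ j) by (apply pow_lt; lra).
      rewrite (lsum_ext _ _ (fun p => / 2 ^ S j *
          (fst (fst p) * prodR (S m) (fun i => Rmax 0 (snd p i - snd (fst p) i))))).
      * rewrite lsum_scal. change (lsum (cells k m (h * 2 ^ j)) _) with (Tval (S m) (cells k m (h * 2 ^ j))). rewrite IH.
        -- simpl. field. lra.
        -- apply Rmult_le_pos; lra.
      * intros p _. cbn [fst snd].
        rewrite (prodR_S (S m)). change (consf (/ 2 ^ j) (snd p) O) with (/ 2 ^ j).
        change (consf (/ 2 ^ S j) (snd (fst p)) O) with (/ 2 ^ S j).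
        unfold shift. simpl consf. cbv beta.
        rewrite (Rmax_right 0 (/ 2 ^ j - / 2 ^ S j)).
        -- replace (/ 2 ^ j - / 2 ^ S j) with (/ 2 ^ S j) by (simpl; field; lra). ring.
        -- simpl. assert (0 < / 2 ^ j) by (apply Rinv_0_lt_compat; lra).
           replace (/ 2 ^ j - / (2 * 2 ^ j)) with (/ (2 * 2 ^ j)) by (field; lra).
           apply Rlt_le, Rinv_0_lt_compat; lra.
Qed.

Lemma sum_disj (P : nat -> Prop) (v : nat -> R) k :
  (forall j, 0 <= v j <= 1) -> (forall j j', P j -> P j' -> j = j') ->
  sumR k (fun j => ind (P j) * v j) <= ind (exists j, (j < k)%nat /\ P j).
Proof.
  intros Hv Hd. induction k as [|k IH].
  - simpl. apply ind_01.
  - simpl sumR. destruct (classic (P k)) as [HP|HP].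
    + rewrite (sumR_zero k).
      * rewrite (ind_T (P k) HP), ind_T by (exists k; split; [lia|exact HP]).
        specialize (Hv k). lra.
      * intros j Hj. rewrite ind_F; [ring|]. intro HPj. specialize (Hd _ _ HPj HP). lia.
    + rewrite (ind_F (P k) HP).
      apply Rle_trans with (ind (exists j, (j < k)%nat /\ P j)); [lra|].
      apply ind_mono. intros [j [Hj1 Hj2]]. exists j. split; [lia|exact Hj2].
Qed.

Lemma Fval_ge0 k m h x : 0 <= Fval (S m) (cells k m h) x.
Proof.
  unfold Fval. apply lsum_ge0. intros q Hq. rewrite (cells_c _ _ _ _ Hq).
  rewrite Rmult_1_l. apply ind_01.
Qed.

Lemma cells_F k m : forall h x, Fval (S m) (cells k m h) x <= ind (Eset k m h x).
Proof.
  induction m as [|m IH]; intros h x.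
  - unfold Fval. simpl. rewrite Rmult_1_l, Rplus_0_r. apply ind_mono.
    intro H. exists (fun _ => 1). split; [intros; lia|]. split; [intros; lia|].
    specialize (H O ltac:(lia)). simpl. unfold Rdiv. rewrite Rinv_1. lra.
  - change (cells k (S m) h) with (cells_step k (fun j => cells k m (h * 2 ^ j))).
    unfold cells_step, Fval. rewrite lsum_flat_seq.
    set (P := fun j => / 2 ^ S j < x O <= / 2 ^ j).
    set (v := fun j => Fval (S m) (cells k m (h * 2 ^ j)) (shift x)).
    rewrite (sumR_ext k _ (fun j => ind (P j) * v j)).
    2:{ intros j Hj. rewrite lsum_map. unfold v, Fval. rewrite <- lsum_scal.
        apply lsum_ext. intros p _. cbn [fst snd].
        rewrite (ind_iff _ _ (inhbox_S (S m) _ _ x)), ind_and.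
        change (consf (/ 2 ^ S j) (snd (fst p)) O) with (/ 2 ^ S j).
        change (consf (/ 2 ^ j) (snd p) O) with (/ 2 ^ j).
        change (shift (consf (/ 2 ^ S j) (snd (fst p)))) with (snd (fst p)).
        change (shift (consf (/ 2 ^ j) (snd p))) with (snd p). unfold P. ring. }
    destruct (classic (exists j, (j < k)%nat /\ P j /\ Eset k m (h * 2 ^ j) (shift x)))
      as [HE|HE].
    + destruct HE as [j [Hj [HPj [s [Hs1 [Hs2 Hs3]]]]]].
      rewrite ind_T.
      * apply Rle_trans with (ind (exists j, (j < k)%nat /\ P j)); [|apply ind_01].
        apply sum_disj.
        -- intro j'. split; [apply Fval_ge0|]. unfold v.
           apply Rle_trans with (ind (Eset k m (h * 2 ^ j') (shift x))); [apply IH|apply ind_01].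
        -- intros j1 j2 H1 H2. unfold P in H1, H2.
           destruct (Nat.lt_trichotomy j1 j2) as [Hl|[He|Hl]]; [|exact He|].
           ++ assert (/ 2 ^ j2 <= / 2 ^ S j1) by (apply inv_pow_le; lia). lra.
           ++ assert (/ 2 ^ j1 <= / 2 ^ S j2) by (apply inv_pow_le; lia). lra.
      * unfold P in HPj.
        assert (Hpos : 0 < / 2 ^ S j) by (apply Rinv_0_lt_compat, pow_lt; lra).
        exists (consf (/ 2 ^ j) s). split; [|split].
        -- intros i Hi. destruct i as [|i].
           ++ exists j. split; [lia|reflexivity].
           ++ apply Hs1. lia.
        -- intros i Hi. destruct i as [|i].
           ++ simpl. lra.
           ++ apply (Hs2 i). lia.
        -- rewrite prodR_S. change (consf (/ 2 ^ j) s O) with (/ 2 ^ j).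
           change (shift (consf (/ 2 ^ j) s)) with s.
           change (x (S m)) with (shift x m).
           assert (Hp : 0 < prodR m s).
           { apply prodR_pos. intros i Hi. destruct (Hs1 i Hi) as [ji [_ ->]].
             apply Rinv_0_lt_compat, pow_lt; lra. }
           assert (H2 : 0 < 2 ^ j) by (apply pow_lt; lra).
           replace (h / (/ 2 ^ j * prodR m s)) with (h * 2 ^ j / prodR m s)
             by (field; split; lra).
           exact Hs3.
    + rewrite (sumR_zero k).
      * apply ind_01.
      * intros j Hj. destruct (classic (P j)) as [HPj|HPj].
        -- assert (Hv : v j = 0).
           { apply Rle_antisym; [|apply Fval_ge0]. unfold v.
             rewrite <- (ind_F (Eset k m (h * 2 ^ j) (shift x))).
             - apply IH.
             - intro HE'. apply HE. exists j. tauto. }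
           rewrite Hv. ring.
        -- rewrite (ind_F _ HPj). ring.
Qed.

Theorem mainTheorem2 (n : nat) (alpha : R) (k : nat)
  (hn : (2 <= n)%nat) (halpha : 0 < alpha) (hk : (1 <= k)%nat) :
  lebesgue_measure_ge n (union_Rk n k alpha)
    (/ (3 * 2 ^ (n - 2)) * INR k ^ (n - 1) * alpha).
Proof.
  intros a b Hcov M HM.
  destruct n as [|m]; [lia|].
  assert (Hc := claim (S m) (cells k m alpha) (fun _ => 1) a b).
  assert (HT := cells_T k m alpha ltac:(lra)).
  assert (HTM : Tval (S m) (cells k m alpha) <= M).
  { apply Hc.
    - intros; lra.
    - intros p Hp. rewrite (cells_c _ _ _ _ Hp). lra.
    - intros x M' HM'. apply Rle_trans with (ind (Eset k m alpha x)); [apply cells_F|].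
      destruct (classic (Eset k m alpha x)) as [HE|HE].
      + rewrite ind_T by exact HE.
        assert (HU : union_Rk (S m) k alpha x).
        { unfold union_Rk. replace (S m - 1)%nat with m by lia. exact HE. }
        destruct (Hcov x HU) as [k0 Hk0].
        specialize (HM' (S k0)). simpl in HM'.
        rewrite (ind_T (inbox (S m) (a k0) (b k0) x)) in HM' by exact Hk0.
        assert (0 <= sumR k0 (fun k1 => 1 * ind (inbox (S m) (a k1) (b k1) x))).
        { apply sumR_ge0. intro; rewrite Rmult_1_l; apply ind_01. }
        lra.
      + rewrite ind_F by exact HE. specialize (HM' O). simpl in HM'. lra.
    - intro N. rewrite (sumR_ext N _ (fun k0 => box_vol (S m) (a k0) (b k0))).
      + apply HM.
      + intros; ring. }
  rewrite HT in HTM.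
  destruct m as [|m']; [lia|].
  replace (S (S m') - 2)%nat with m' by lia.
  replace (S (S m') - 1)%nat with (S m') by lia.
  apply Rle_trans with (alpha * (INR k / 2) ^ S m'); [|exact HTM].
  unfold Rdiv. rewrite Rpow_mult_distr, pow_inv.
  assert (Hp : 0 < 2 ^ m') by (apply pow_lt; lra).
  assert (HK : 0 <= INR k ^ S m') by (apply pow_le, pos_INR).
  assert (Hi : / (3 * 2 ^ m') <= / 2 ^ S m').
  { apply Rinv_le_contravar; [apply pow_lt; lra|]. simpl. lra. }
  apply Rle_trans with (/ 2 ^ S m' * INR k ^ S m' * alpha).
  - apply Rmult_le_compat_r; [lra|]. apply Rmult_le_compat_r; [exact HK|exact Hi].
  - right. ring.
Qed.
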